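(* Let $\mathcal{H}$ be a real Hilbert space and let $f,g\in \Gamma_0(\mathcal{H})$. Suppose that for some $x_0\in \operatorname{dom} f\cap \operatorname{dom} g$, $$\Vert \operatorname{prox}_f(x)-x_0\Vert\leq \Vert \operatorname{prox}_g(x)-x_0\Vert \quad \text{for all } x\in \mathcal{H}.$$ Then $g-g(x_0)\leq f-f(x_0)$ on $\mathcal{H}$.
   Context: $\Gamma_0(\mathcal{H})$ denotes the set of proper, convex, lower semicontinuous functions $\mathcal{H}\to\mathbb{R}\cup\{+\infty\}$. For $f\in\Gamma_0(\mathcal{H})$, $\operatorname{prox}_f(x)=\operatorname{argmin}_{y\in\mathcal{H}}\{f(y)+\tfrac12\Vert x-y\Vert^2\}$ (the minimizer exists and is unique). $\operatorname{dom} f=\{x: f(x)<+\infty\}$. *)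

(* Defs.v *)
From HB Require Import structures.
From mathcomp Require Import all_boot all_order all_algebra.
From mathcomp Require Import all_classical all_reals all_analysis.
Set Implicit Arguments. Unset Strict Implicit. Unset Printing Implicit Defensive.
Import Order.TTheory GRing.Theory Num.Theory.
Import numFieldNormedType.Exports.
Local Open Scope classical_set_scope.
Local Open Scope ring_scope.

(* A real Hilbert space: a complete normed space E over R whose norm comes
   from an inner product [ip] (symmetric, linear in first argument,
   |x|^2 = <x,x>). *)
Definition is_inner_product (R : realType) (E : normedModType R)
    (ip : E -> E -> R) : Prop :=
  (forall x y, ip x y = ip y x) /\
  (forall (a : R) (x y z : E), ip (a *: x + y) z = a * ip x z + ip y z) /\
  (forall x, `|x| ^+ 2 = ip x x).

Definition proper_fun (R : realType) (E : normedModType R) (f : E -> \bar R) :=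
  (forall x, f x != -oo%E) /\ (exists x, f x < +oo)%E.

Definition convex_efun (R : realType) (E : normedModType R) (f : E -> \bar R) :=
  forall (t : R) (x y : E), 0 < t < 1 ->
    (f (t *: x + (1 - t) *: y)%R <= t%:E * f x + (1 - t)%:E * f y)%E.

Definition Gamma0 (R : realType) (E : normedModType R) (f : E -> \bar R) :=
  [/\ proper_fun f, convex_efun f & lower_semicontinuous f].

Definition dom (R : realType) (E : normedModType R) (f : E -> \bar R) : set E :=
  [set x | (f x < +oo)%E].

(* prox_f(x) = argmin_y { f y + 1/2 |x - y|^2 }; the minimizer is chosen
   by [get]; for f in Gamma0 it exists and is unique. *)
Definition is_prox (R : realType) (E : normedModType R) (f : E -> \bar R)
    (x p : E) : Prop :=
  forall y : E, (f p + (2^-1 * `|x - p| ^+ 2)%:E <= f y + (2^-1 * `|x - y| ^+ 2)%:E)%E.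

Definition prox (R : realType) (E : normedModType R) (f : E -> \bar R) (x : E) : E :=
  get [set p | is_prox f x p].

(* Main.v *)
Require Import Defs.
From HB Require Import structures.
From mathcomp Require Import all_boot all_order all_algebra.
From mathcomp Require Import all_classical all_reals all_analysis.
From mathcomp Require Import ring lra.
Import Order.TTheory GRing.Theory Num.Theory.
Import numFieldNormedType.Exports.
Local Open Scope classical_set_scope.
Local Open Scope ring_scope.

Section IP.
Variables (R : realType) (E : completeNormedModType R) (ip : E -> E -> R).
Hypothesis Hip : is_inner_product ip.

Lemma ipC x y : ip x y = ip y x.
Proof. by case: Hip. Qed.

Lemma ipZDl a x y z : ip (a *: x + y) z = a * ip x z + ip y z.
Proof. by case: Hip => _ []. Qed.

Lemma ipnorm x : `|x| ^+ 2 = ip x x.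
Proof. by case: Hip => _ []. Qed.

Lemma ipDl x y z : ip (x + y) z = ip x z + ip y z.
Proof. by rewrite -[x]scale1r ipZDl mul1r scale1r. Qed.

Lemma ip0l z : ip 0 z = 0.
Proof. by have := ipDl 0 0 z; rewrite addr0 => /eqP; rewrite -subr_eq subrr eq_sym => /eqP. Qed.

Lemma ipZl a x z : ip (a *: x) z = a * ip x z.
Proof. by rewrite -[a *: x]addr0 ipZDl ip0l addr0. Qed.

Lemma ipNl x z : ip (- x) z = - ip x z.
Proof. by rewrite -scaleN1r ipZl mulN1r. Qed.

Lemma ipBl x y z : ip (x - y) z = ip x z - ip y z.
Proof. by rewrite ipDl ipNl. Qed.

Lemma ipDr x y z : ip z (x + y) = ip z x + ip z y.
Proof. by rewrite ipC ipDl ![ip _ z]ipC. Qed.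

Lemma ipZr a x z : ip z (a *: x) = a * ip z x.
Proof. by rewrite ipC ipZl ipC. Qed.

Lemma ipNr x z : ip z (- x) = - ip z x.
Proof. by rewrite ipC ipNl ipC. Qed.

Lemma ipBr x y z : ip z (x - y) = ip z x - ip z y.
Proof. by rewrite ipDr ipNr. Qed.

Lemma ip0r z : ip z 0 = 0.
Proof. by rewrite ipC ip0l. Qed.

Lemma normD2 x y : `|x + y| ^+ 2 = `|x| ^+ 2 + 2 * ip x y + `|y| ^+ 2.
Proof. rewrite !ipnorm ipDl !ipDr (ipC y x); ring. Qed.

Lemma normB2 x y : `|x - y| ^+ 2 = `|x| ^+ 2 - 2 * ip x y + `|y| ^+ 2.
Proof. rewrite normD2 ipNr normrN; ring. Qed.

Lemma ipCS x y : ip x y <= `|x| * `|y|.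
Proof.
have h : `|x + y| ^+ 2 <= (`|x| + `|y|) ^+ 2.
  by rewrite lerXn2r ?nnegrE ?addr_ge0 // ler_normD.
move: h; rewrite normD2 => h; nra.
Qed.

Lemma ipCSabs x y : `|ip x y| <= `|x| * `|y|.
Proof.
rewrite ler_norml ipCS andbT -(opprK (ip x y)) lerN2 -ipNl.
by rewrite (le_trans (ipCS _ _)) // normrN.
Qed.


Implicit Types (phi : E -> \bar R).

Lemma phi_cases {phi} x : Gamma0 phi -> phi x = +oo%E \/ exists r, phi x = r%:E.
Proof.
case=> [[nN _] _ _]; move: (nN x); case: (phi x) => [r| |] //= _.
- by right; exists r.
- by left.
Qed.

Lemma lin_lb {phi} : Gamma0 phi -> exists (a : E) (fa al be : R),
  [/\ phi a = fa%:E, 0 <= be & forall z, ((al - be * `|z - a|)%:E <= phi z)%E].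
Proof.
move=> G; have [[nN [a1 Ha1]] cv lsc] := G.
have [Hoo|[fa Hfa]] := phi_cases a1 G; first by rewrite Hoo ltxx in Ha1.
have : ((fa - 1)%:E < phi a1)%E by rewrite Hfa lte_fin ltrBlDr ltrDl.
move=> /lsc [V /nbhs_ballP [r /= r0 rV] HV].
exists a1, fa, (fa - 1), (2 / r); split => //.
  by rewrite divr_ge0 // ltW.
move=> z.
have [zr|zr] := ltrP `|z - a1| r.
  apply: le_trans (ltW (HV _ (rV _ _))); last first.
    by rewrite -ball_normE /= -normrN opprB.
  rewrite lee_fin; have h : 0 <= 2 / r * `|z - a1| by rewrite mulr_ge0 ?divr_ge0 // ltW.
  move: h; set t := 2 / r * _; move=> h; lra.
have [->|[fz Hfz]] := phi_cases z G; first exact: leey.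
set d := `|z - a1| in zr *.
have d0 : 0 < d by apply: lt_le_trans zr.
set s := r / (2 * d).
have s0 : 0 < s by rewrite divr_gt0 // mulr_gt0.
have s1 : s < 1.
  rewrite /s ltr_pdivrMr ?mulr_gt0 // mul1r; lra.
have := cv s z a1; rewrite s0 s1 => /(_ isT) cvx.
have wV : V (s *: z + (1 - s) *: a1).
  apply: rV; rewrite -ball_normE /=.
  have -> : a1 - (s *: z + (1 - s) *: a1) = - (s *: (z - a1)).
    by rewrite scalerBl scale1r scalerBr !opprD !opprK addrCA [a1 + _]addrA subrr add0r.
  rewrite normrN normrZ gtr0_norm // /s -/d.
  have -> : r / (2 * d) * d = r / 2 by field; rewrite gt_eqF.
  lra.
have := lt_le_trans (HV _ wV) cvx.
rewrite Hfz Hfa -!EFinM -EFinD lte_fin => h.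
rewrite lee_fin.
have e1 : (1 - s) * fa <= (1 - s) * fa by [].
have : fa - 1 - (1 - s) * fa < s * fz by lra.
have -> : fa - 1 - (1 - s) * fa = s * (fa - 1) - (1 - s) by ring.
move=> h2.
have h3 : s * (fa - 1 - 2 / r * d) <= s * (fa - 1) - (1 - s).
  rewrite mulrBr lerD2l lerN2.
  have -> : s * (2 / r * d) = 1.
    by rewrite /s; field; rewrite !gt_eqF.
  lra.
have := le_lt_trans h3 h2; rewrite ltr_pM2l // => /ltW.
done.
Qed.


Lemma sq_lb (c be u : R) : 0 < c -> - (be ^+ 2 / (4 * c)) <= c * u ^+ 2 - be * u.
Proof.
move=> c0.
have -> : c * u ^+ 2 - be * u = c * (u - be / (2 * c)) ^+ 2 - be ^+ 2 / (4 * c).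
  by field; rewrite gt_eqF.
have : 0 <= c * (u - be / (2 * c)) ^+ 2 by rewrite mulr_ge0 ?sqr_ge0 // ltW.
lra.
Qed.

Lemma mid_norm (x zi zj : E) :
  `|x - (2^-1 *: zi + (1 - 2^-1) *: zj)| ^+ 2 =
  (`|x - zi| ^+ 2 + `|x - zj| ^+ 2) / 2 - `|zi - zj| ^+ 2 / 4.
Proof.
rewrite !ipnorm !(ipNl, ipNr, ipDl, ipDr, ipZl, ipZr).
rewrite (ipC zj zi) (ipC zi x) (ipC zj x).
by field.
Qed.


Lemma prox_ex phi (c : R) (x : E) : Gamma0 phi -> 0 < c ->
  exists p : E, forall y,
    (phi p + (c * `|x - p| ^+ 2)%:E <= phi y + (c * `|x - y| ^+ 2)%:E)%E.
Proof.
move=> G c0; have [_ cv lsc] := G.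
have [a [fa [al [be [Hfa be0 Hlb]]]]] := lin_lb G.
pose S := [set v : R | exists z r, phi z = r%:E /\ v = r + c * `|x - z| ^+ 2].
pose L := al - be * `|x - a| - be ^+ 2 / (4 * c).
have SL : forall v, S v -> L <= v.
  move=> v [z [r [Hz ->]]].
  have := Hlb z; rewrite Hz lee_fin => hz.
  have t1 : `|z - a| <= `|x - z| + `|x - a|.
    have -> : z - a = (z - x) + (x - a) by rewrite addrA subrK.
    by apply: le_trans (ler_normD _ _) _; rewrite (distrC z x).
  have t2 : be * `|z - a| <= be * `|x - z| + be * `|x - a|.
    by rewrite -mulrDr ler_wpM2l.
  have := @sq_lb c be (`|x - z|) c0.
  rewrite /L; lra.
have Sa : S (fa + c * `|x - a| ^+ 2) by exists a, fa.
have hS : has_inf S.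
  by split; [exists (fa + c * `|x - a| ^+ 2) | exists L => v /SL].
pose m := inf S.
have mS : forall v, S v -> m <= v := fun v Sv => ge_inf hS.2 Sv.
have sq : forall n : nat, exists z, exists r,
    phi z = r%:E /\ r + c * `|x - z| ^+ 2 < m + n.+1%:R^-1.
  move=> n; have e0 : 0 < n.+1%:R^-1 :> R by rewrite invr_gt0 ltr0Sn.
  have [v [z [r [Hz ->]]] Hv] := inf_adherent e0 hS.
  by exists z, r.
have [zs Hzs] := choice sq.
have cau : forall i j : nat,
    c * `|zs i - zs j| ^+ 2 / 4 < (i.+1%:R^-1 + j.+1%:R^-1) / 2.
  move=> i j; have [ri [Hi Ii]] := Hzs i; have [rj [Hj Ij]] := Hzs j.
  have h12 : 0 < (2 : R)^-1 < 1 by rewrite invr_gt0 invf_lt1 ?ltr0n ?ltr1n.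
  have := cv (2^-1) (zs i) (zs j) h12.
  rewrite Hi Hj -!EFinM -EFinD.
  set w := 2^-1 *: zs i + (1 - 2^-1) *: zs j.
  have [->|[rw Hw]] := phi_cases w G; first by rewrite leNgt ltey.
  rewrite Hw lee_fin => hw.
  have := mS (rw + c * `|x - w| ^+ 2) (ex_intro _ w (ex_intro _ rw (conj Hw erefl))).
  rewrite /w mid_norm.
  move=> hm.
  have e : c * ((`|x - zs i| ^+ 2 + `|x - zs j| ^+ 2) / 2 - `|zs i - zs j| ^+ 2 / 4)
    = c * `|x - zs i| ^+ 2 / 2 + c * `|x - zs j| ^+ 2 / 2 - c * `|zs i - zs j| ^+ 2 / 4.
    by field.
  rewrite e in hm.
  move: Ii Ij; set ei := i.+1%:R^-1; set ej := j.+1%:R^-1 => Ii Ij.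
  lra.
have cvz : cvg (zs @ \oo).
  apply: cauchy_cvg; apply: cauchy_exP => eps eps0.
  have ce0 : 0 < c * eps ^+ 2 by rewrite mulr_gt0 // exprn_gt0.
  pose N := Num.truncn (4 / (c * eps ^+ 2)).
  have HN : 4 / (c * eps ^+ 2) < N.+1%:R := truncnS_gt _.
  exists (zs N); exists N => // n /= Nn.
  rewrite -ball_normE /=.
  have := cau N n.
  have K0 : 0 < N.+1%:R :> R by rewrite ltr0Sn.
  have eN : N.+1%:R^-1 < c * eps ^+ 2 / 4.
    rewrite ltr_pdivrMr // in HN.
    rewrite -[_^-1]mul1r ltr_pdivrMr //; lra.
  have en : n.+1%:R^-1 <= N.+1%:R^-1 :> R.
    by rewrite lef_pV2 ?posrE ?ltr0Sn // ler_nat ltnS.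
  move: eN en; set eNv := N.+1%:R^-1; set env := n.+1%:R^-1 => eN en h.
  have h2 : c * `|zs N - zs n| ^+ 2 < c * eps ^+ 2 by lra.
  rewrite ltr_pM2l // in h2.
  have := normr_ge0 (zs N - zs n); nra.
set p := lim (zs @ \oo).
have key : forall eps, 0 < eps -> (phi p <= (m - c * `|x - p| ^+ 2 + eps)%:E)%E.
  move=> eps e0; rewrite leNgt; apply/negP => Hlt.
  have [V /nbhs_ballP [r /= r0 rV] HV] := lsc _ _ Hlt.
  set P := `|x - p|.
  have P0 : 0 <= P := normr_ge0 _.
  pose del := Num.min r (eps / (4 * c * (P + 1))).
  have del0 : 0 < del.
    by rewrite lt_min r0 /= divr_gt0 // !mulr_gt0 // ltr_pwDr.
  have [N1 _ HN1] := proj1 (cvgrPdist_lt _ _) cvz del del0.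
  pose N2 := Num.truncn (2 / eps).
  have HN2 : 2 / eps < N2.+1%:R := truncnS_gt _.
  pose n := maxn N1 N2.
  have [rn [Hn In]] := Hzs n.
  have dn : `|p - zs n| < del := HN1 n (leq_maxl _ _).
  have Vn : V (zs n).
    apply: rV; rewrite -ball_normE /=; apply: lt_le_trans dn _.
    by rewrite ge_min lexx.
  have := HV _ Vn; rewrite Hn lte_fin => hr.
  have K0 : 0 < N2.+1%:R :> R by rewrite ltr0Sn.
  have eN : N2.+1%:R^-1 < eps / 2.
    rewrite ltr_pdivrMr // in HN2.
    rewrite -[_^-1]mul1r ltr_pdivrMr //; lra.
  have en : n.+1%:R^-1 <= N2.+1%:R^-1 :> R.
    by rewrite lef_pV2 ?posrE ?ltr0Sn // ler_nat ltnS leq_maxr.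
  set u := `|x - zs n| in In.
  have u0 : 0 <= u := normr_ge0 _.
  have tr : P <= u + `|p - zs n|.
    rewrite /P /u (_ : x - p = (x - zs n) + (zs n - p)); last by rewrite addrA subrK.
    by apply: le_trans (ler_normD _ _) _; rewrite (distrC (zs n) p).
  have hu : P ^+ 2 - 2 * del * P <= u ^+ 2.
    have [Pd|Pd] := lerP P (2 * del).
      have : 0 <= P * (2 * del - P) by rewrite mulr_ge0 // subr_ge0.
      have := sqr_ge0 u; nra.
    have : 0 <= P - del <= u by apply/andP; split; lra.
    move=> /andP[h1 h2].
    have : (P - del) ^+ 2 <= u ^+ 2 by rewrite ler_sqr ?nnegrE //; lra.
    have := sqr_ge0 del; nra.
  have hcu : c * (P ^+ 2 - 2 * del * P) <= c * u ^+ 2 by rewrite ler_wpM2l // ltW.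
  have hdel : del * (4 * c * (P + 1)) <= eps.
    rewrite -ler_pdivlMr ?mulr_gt0 ?ltr_pwDr //.
    by rewrite ge_min lexx orbT.
  have cd0 : 0 < c * del by rewrite mulr_gt0.
  move: In eN en; set eNv := N2.+1%:R^-1; set env := n.+1%:R^-1 => In eN en.
  have e1 : c * (P ^+ 2 - 2 * del * P) = c * P ^+ 2 - 2 * (c * del * P) by ring.
  have e2 : del * (4 * c * (P + 1)) = 4 * (c * del * P) + 4 * (c * del) by ring.
  rewrite e1 in hcu; rewrite e2 in hdel.
  move: hcu hdel hr In cd0; rewrite -/P.
  set X := c * del * P; set Y := c * del; set Z := c * P ^+ 2.
  set U := c * u ^+ 2 => hcu hdel hr In cd0.
  lra.
exists p => y.
have [->|[ry Hy]] := phi_cases y G.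
  by rewrite addye ?leey.
have [Hp|[rp Hp]] := phi_cases p G.
  by have := key 1 ltr01; rewrite Hp leNgt ltey.
rewrite Hp Hy -!EFinD lee_fin.
have := mS (ry + c * `|x - y| ^+ 2) (ex_intro _ y (ex_intro _ ry (conj Hy erefl))).
suff : rp + c * `|x - p| ^+ 2 <= m by lra.
apply/ler_addgt0Pr => eps e0.
by have := key eps e0; rewrite Hp lee_fin; lra.
Qed.



Lemma seg_norm (x z p : E) (t : R) :
  `|x - (t *: z + (1 - t) *: p)| ^+ 2 =
  `|x - p| ^+ 2 - 2 * t * ip (x - p) (z - p) + t ^+ 2 * `|z - p| ^+ 2.
Proof.
rewrite !ipnorm !(ipNl, ipNr, ipDl, ipDr, ipZl, ipZr).
rewrite (ipC z x) (ipC p x) (ipC p z).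
by ring.
Qed.

Lemma small_t (a b K : R) : 0 <= K ->
  (forall t, 0 < t < 1 -> a <= b + t * K) -> a <= b.
Proof.
move=> K0 H; apply/ler_addgt0Pr => eps e0.
pose t := Num.min 2^-1 (eps / (K + 1)).
have t0 : 0 < t by rewrite lt_min invr_gt0 ltr0n divr_gt0 // ltr_pwDr.
have t1 : t < 1 by rewrite gt_min invf_lt1 ?ltr0n ?ltr1n.
have := H t; rewrite t0 t1 => /(_ isT) h.
have : t <= eps / (K + 1) by rewrite ge_min lexx orbT.
rewrite ler_pdivlMr ?ltr_pwDr // => h2.
have : t * K <= eps by nra.
lra.
Qed.

Lemma min_char {phi} {c : R} {x p : E} : Gamma0 phi -> 0 < c ->
  (forall y, (phi p + (c * `|x - p| ^+ 2)%:E <= phi y + (c * `|x - y| ^+ 2)%:E)%E) ->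
  exists rp, phi p = rp%:E /\
    forall z rz, phi z = rz%:E -> rp + 2 * c * ip (x - p) (z - p) <= rz.
Proof.
move=> G c0 Hmin; have [[_ [a Ha]] cv _] := G.
have [Hp|[rp Hp]] := phi_cases p G.
  have [Haa|[ra Hra]] := phi_cases a G; first by rewrite Haa ltxx in Ha.
  by have := Hmin a; rewrite Hp Hra addye // leNgt -EFinD ltey.
exists rp; split => // z rz Hz.
apply: (@small_t _ _ (c * `|z - p| ^+ 2)); first by rewrite mulr_ge0 // ltW.
move=> t /andP[t0 t1].
have := cv t z p; rewrite t0 t1 => /(_ isT).
rewrite Hz Hp -!EFinM -EFinD.
set zt := t *: z + (1 - t) *: p.
have [->|[rt Ht]] := phi_cases zt G; first by rewrite leNgt ltey.
rewrite Ht lee_fin => h1.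
have := Hmin zt; rewrite Hp Ht -!EFinD lee_fin /zt seg_norm => h2.
have h3 : t * (rp + 2 * c * ip (x - p) (z - p)) <= t * (rz + t * (c * `|z - p| ^+ 2)).
  move: h1 h2; set I := ip (x - p) (z - p); set K := `|z - p| ^+ 2.
  set L := `|x - p| ^+ 2 => h1 h2.
  have e1 : c * (L - 2 * t * I + t ^+ 2 * K) = c * L - 2 * (t * (c * I)) + t * (t * (c * K)) by ring.
  have e2 : t * (rp + 2 * c * I) = t * rp + 2 * (t * (c * I)) by ring.
  have e3 : t * (rz + t * (c * K)) = t * rz + t * (t * (c * K)) by ring.
  have e4 : (1 - t) * rp = rp - t * rp by ring.
  rewrite e1 in h2; rewrite e2 e3; rewrite e4 in h1.
  lra.
by rewrite ler_pM2l in h3.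
Qed.


Lemma prox_spec {phi} x : Gamma0 phi -> is_prox phi x (prox phi x).
Proof.
move=> G; rewrite /prox; apply: getPex.
have h2 : 0 < (2 : R)^-1 by rewrite invr_gt0 ltr0n.
have [p Hp] := @prox_ex phi 2^-1 x G h2.
by exists p.
Qed.

Definition Hf phi x := ip x (prox phi x) - fine (phi (prox phi x))
  - 2^-1 * `|prox phi x| ^+ 2.

Lemma prox_fin {phi} x : Gamma0 phi -> phi (prox phi x) = (fine (phi (prox phi x)))%:E.
Proof.
move=> G; have h2 : 0 < (2 : R)^-1 by rewrite invr_gt0 ltr0n.
have [rp [Hp _]] := min_char G h2 (prox_spec x G).
by rewrite Hp.
Qed.

Lemma prox_char {phi} x z rz : Gamma0 phi -> phi z = rz%:E ->
  fine (phi (prox phi x)) + ip (x - prox phi x) (z - prox phi x) <= rz.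
Proof.
move=> G Hz; have h2 : 0 < (2 : R)^-1 by rewrite invr_gt0 ltr0n.
have [rp [Hp Hc]] := min_char G h2 (prox_spec x G).
have := Hc z rz Hz; rewrite Hp /=.
by rewrite mulfV ?mul1r // pnatr_eq0.
Qed.

Lemma H_ge {phi} x y ry : Gamma0 phi -> phi y = ry%:E ->
  ip x y - ry - 2^-1 * `|y| ^+ 2 <= Hf phi x.
Proof.
move=> G Hy; have := prox_spec x G y; rewrite prox_fin // Hy -!EFinD lee_fin.
rewrite /Hf !normB2; set p := prox phi x; set rp := fine (phi p).
lra.
Qed.

Lemma H_eq {phi} x p' : Gamma0 phi -> is_prox phi x p' ->
  exists r', phi p' = r'%:E /\ Hf phi x = ip x p' - r' - 2^-1 * `|p'| ^+ 2.
Proof.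
move=> G Hp'; have h2 : 0 < (2 : R)^-1 by rewrite invr_gt0 ltr0n.
have [r' [Hr' _]] := min_char G h2 Hp'.
exists r'; split => //; apply/eqP; rewrite eq_le; apply/andP; split; last first.
  exact: H_ge.
have := Hp' (prox phi x); rewrite prox_fin // Hr' -!EFinD lee_fin.
rewrite /Hf !normB2; set p := prox phi x; set rp := fine (phi p).
lra.
Qed.

Lemma H_B {phi} x z : Gamma0 phi ->
  Hf phi x + ip (prox phi x) (z - x) <= Hf phi z.
Proof.
move=> G; have := @H_ge _ z _ _ G (prox_fin x G).
rewrite {2}/Hf ipBr (ipC _ z) (ipC _ x).
lra.
Qed.

Lemma H_C {phi} x z : Gamma0 phi ->
  Hf phi z <= Hf phi x + ip (prox phi x) (z - x) + 2^-1 * `|z - x| ^+ 2.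
Proof.
move=> G; have := @prox_char _ x _ _ G (prox_fin z G).
rewrite /Hf; set p := prox phi x; set q := prox phi z.
set rp := fine (phi p); set rq := fine (phi q) => h.
have := sqr_ge0 `|(z - x) - (q - p)|.
rewrite !ipnorm !(ipNl, ipNr, ipDl, ipDr) in h *.
rewrite !(ipC z x) !(ipC q x) !(ipC p x) !(ipC q z) !(ipC p z) !(ipC q p) in h *.
move=> h2.
lra.
Qed.

Lemma amgm (s r mu : R) : 0 < mu -> s * r <= (mu * s ^+ 2 + r ^+ 2 / mu) / 2.
Proof.
move=> mu0.
have e : (mu * s ^+ 2 + r ^+ 2 / mu) / 2 - s * r = (mu * s - r) ^+ 2 / (2 * mu).
  by field; rewrite gt_eqF.
have : 0 <= (mu * s - r) ^+ 2 / (2 * mu) by rewrite divr_ge0 ?sqr_ge0 // mulr_ge0 // ltW.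
rewrite -e; lra.
Qed.

Lemma sq_sum2 (u v : E) : `|u + v| ^+ 2 <= 2 * `|u| ^+ 2 + 2 * `|v| ^+ 2.
Proof.
have := sqr_ge0 `|u - v|; rewrite normB2 normD2; lra.
Qed.

Lemma avg_min (u : nat -> R) n : (0 < n)%N ->
  exists2 k, (k < n)%N & n%:R * u k <= \sum_(j < n) u j.
Proof.
move=> n0.
have [k kn kmin] : exists2 k, (k < n)%N & forall j, (j < n)%N -> u k <= u j.
  case: n n0 => // n _; elim: n => [|n [k kn kmin]].
    by exists 0%N => // j; rewrite ltnS leqn0 => /eqP ->.
  have [uk|uk] := leP (u k) (u n.+1).
    exists k; first by rewrite ltnS ltnW.
    move=> j; rewrite ltnS leq_eqVlt => /orP[/eqP ->//|]; exact: kmin.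
  exists n.+1 => // j; rewrite ltnS leq_eqVlt => /orP[/eqP ->//|/kmin].
  by apply: le_trans; apply: ltW.
exists k => //.
have -> : n%:R * u k = \sum_(j < n) u k by rewrite sumr_const card_ord mulr_natl.
by apply: ler_sum => j _; apply: kmin.
Qed.

Fixpoint gdseq (a : E -> E) (t : R) (x : E) (n : nat) : E :=
  if n is k.+1 then gdseq a t x k - t *: a (gdseq a t x k) else x.

Lemma gd_inv (F G : E -> R) (a b : E -> E) (lg : R) (x m : E) (t : R) :
  (forall x z, G x + ip (a x) (z - x) <= G z) ->
  (forall x z, G z <= G x + ip (a x) (z - x) + 2^-1 * `|z - x| ^+ 2) ->
  (forall x z, F x + ip (b x) (z - x) <= F z) ->
  (forall x, `|b x| <= `|a x|) ->
  (forall x, lg <= G x) -> 0 < t <= 1 ->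
  forall n, let z := gdseq a t x in
  [/\ (1 - t / 2) * (F x - F (z n)) <= G x - G (z n),
      (t * (1 - t / 2)) * (\sum_(k < n) `|a (z k)| ^+ 2) <= G x - G (z n) &
      `|z n - m| ^+ 2 <= `|x - m| ^+ 2 + 2 * t * n%:R * (G m - lg)
          + t ^+ 2 * \sum_(k < n) `|a (z k)| ^+ 2].
Proof.
move=> GB GC FB Hn Gl /andP[t0 t1] n z.
elim: n => [|n [I1 I2 I3]].
  by rewrite big_ord0 /z /= !subrr !mulr0 !mul0r !addr0 lexx.
rewrite big_ord_recr /=.
have ez : z n.+1 = z n - t *: a (z n) by [].
set zn := z n in I1 I2 I3 ez *; set an := a zn.
have ed : z n.+1 - zn = - (t *: an) by rewrite ez addrAC subrr add0r.
set Sn := \sum_(i < n) `|a (z i)| ^+ 2 in I2 I3 *.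
have hG : G (z n.+1) <= G zn - t * `|an| ^+ 2 + t ^+ 2 / 2 * `|an| ^+ 2.
  have := GC zn (z n.+1); rewrite ed ipNr ipZr -ipnorm.
  rewrite normrN normrZ gtr0_norm // exprMn; lra.
have hF : F zn - F (z n.+1) <= t * `|an| ^+ 2.
  have := FB zn (z n.+1); rewrite ed ipNr ipZr.
  have := ipCS (b zn) an.
  have : `|b zn| * `|an| <= `|an| * `|an| by rewrite ler_wpM2r.
  rewrite -expr2 => h1 h2 h3.
  have : t * ip (b zn) an <= t * `|an| ^+ 2.
    by apply: ler_wpM2l; [exact: ltW | exact: le_trans h2 h1].
  lra.
have t2 : 0 <= 1 - t / 2 by lra.
have hF2 : (1 - t / 2) * (F zn - F (z n.+1)) <= (1 - t / 2) * (t * `|an| ^+ 2).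
  exact: ler_wpM2l.
have hGm : G zn - G m <= ip an (zn - m).
  have := GB zn m; rewrite -opprB ipNr; lra.
have hnorm : `|z n.+1 - m| ^+ 2 = `|zn - m| ^+ 2 - 2 * t * ip an (zn - m) + t ^+ 2 * `|an| ^+ 2.
  rewrite ez (_ : zn - t *: an - m = (zn - m) - t *: an); last first.
    by rewrite addrAC.
  rewrite normB2 ipZr normrZ gtr0_norm // exprMn (ipC (zn - m)); ring.
have hGl := Gl zn.
have htG : t * (G zn - G m) <= t * ip an (zn - m) by apply: ler_wpM2l; [exact: ltW | lra].
move: I1 I2 I3 hG hF hF2 hGm hnorm hGl htG.
set A := `|an| ^+ 2; set IP := ip an (zn - m).
rewrite (_ : n.+1%:R = n%:R + 1 :> R); last by rewrite natr1.
have e1 : (1 - t / 2) * (F x - F (z n.+1)) = (1 - t / 2) * (F x - F zn) + (1 - t / 2) * (F zn - F (z n.+1)) by ring.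
have e2 : (1 - t / 2) * (t * A) = t * A - t ^+ 2 / 2 * A by field.
have e3 : t * (1 - t / 2) * (Sn + A) = t * (1 - t / 2) * Sn + t * A - t ^+ 2 / 2 * A by field.
have e4 : 2 * t * (n%:R + 1) * (G m - lg) = 2 * t * n%:R * (G m - lg) + 2 * (t * G m) - 2 * (t * lg) by ring.
have e5 : t ^+ 2 * (Sn + A) = t ^+ 2 * Sn + t ^+ 2 * A by ring.
have e6 : t * (G zn - G m) = t * G zn - t * G m by ring.
rewrite e1 e3 e4 e5 e2 e6.
have htl : t * lg <= t * G zn by apply: ler_wpM2l; [exact: ltW | exact: Gl].
move=> I1 I2 I3 hG hF hF2 hGm hnorm hGl htG.
split; first by lra.
  by lra.
rewrite hnorm.
lra.
Qed.

Lemma gd_compare (F G : E -> R) (a b : E -> E) (lf lg : R) :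
  (forall x z, G x + ip (a x) (z - x) <= G z) ->
  (forall x z, G z <= G x + ip (a x) (z - x) + 2^-1 * `|z - x| ^+ 2) ->
  (forall x z, F x + ip (b x) (z - x) <= F z) ->
  (forall x, `|b x| <= `|a x|) ->
  (forall x, lg <= G x) -> (forall g, 0 < g -> exists m, G m < lg + g) ->
  (forall x, lf <= F x) -> (forall g, 0 < g -> exists w, F w < lf + g) ->
  forall x, F x - lf <= G x - lg.
Proof.
move=> GB GC FB Hn Gl Gm Fl Fw x.
set S := G x - lg; have S0 : 0 <= S by rewrite subr_ge0.
set A := F x - lf.
apply: (@small_t _ _ `|A|); first exact: normr_ge0.
move=> t /andP[t0 t1].
apply/ler_addgt0Pr => d d0.
suff main : (1 - t / 2) * A <= S + d.
  have : t * A <= t * `|A|.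
    by apply: ler_wpM2l; [exact: ltW | exact: ler_norm].
  have e : (1 - t / 2) * A = A - (t * A) / 2 by ring.
  rewrite e in main.
  have : 0 <= t * `|A| by apply: mulr_ge0; [exact: ltW | exact: normr_ge0].
  lra.
have t01 : 0 < t <= 1 by rewrite t0 ltW.
pose nu := d / (3 * (S + 1)).
have nu0 : 0 < nu by rewrite divr_gt0 // mulr_gt0 // ltr_pwDr.
have g0 : 0 < d * nu / 12 by rewrite divr_gt0 // mulr_gt0.
have [m Hm] := Gm _ g0.
have [w Hw] := Fw (d / 3) (divr_gt0 d0 (ltr0n _ 3 : (0 : R) < 3%:R)).
set gam := G m - lg.
have gam0 : 0 <= gam by rewrite subr_ge0.
have gamd : gam < d * nu / 12 by rewrite /gam; lra.
pose K := 2 * `|w - m| ^+ 2 + 2 * `|x - m| ^+ 2 + 4 * S.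
have K0 : 0 <= K by rewrite /K; have := sqr_ge0 `|w - m|; have := sqr_ge0 `|x - m|; lra.
have dtn0 : 0 < d * t * nu by apply: mulr_gt0 => //; apply: mulr_gt0.
pose n := (Num.truncn (3 * K / (d * t * nu))).+1.
have Hn' : 3 * K / (d * t * nu) < n%:R := truncnS_gt _.
have n0 : 0 < n%:R :> R by rewrite ltr0Sn.
pose z := gdseq a t x.
have [k kn hk] := avg_min (fun j => `|a (z j)| ^+ 2) n (ltn0Sn _).
have [I1 I2 I3] := @gd_inv F G a b lg x m t GB GC FB Hn Gl t01 k.
have [_ J2 _] := @gd_inv F G a b lg x m t GB GC FB Hn Gl t01 n.
rewrite -/z in I1 I2 I3 J2.
set zk := z k in I1 I2 I3 hk *.
set Ak := `|a zk| ^+ 2 in hk *.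
set Sk := \sum_(j < k) `|a (z j)| ^+ 2 in I2 I3.
set Sn := \sum_(j < n) `|a (z j)| ^+ 2 in J2 hk.
have Sk0 : 0 <= Sk by apply: sumr_ge0 => j _; exact: sqr_ge0.
have Sn0 : 0 <= Sn by apply: sumr_ge0 => j _; exact: sqr_ge0.
have Ak0 : 0 <= Ak by exact: sqr_ge0.
have Glk := Gl zk; have Gln := Gl (z n).
have ha : (1 - t / 2) * (F x - F zk) <= S by rewrite /S; lra.
have tSk : t * Sk <= 2 * S.
  have : t * Sk / 2 <= t * (1 - t / 2) * Sk.
    have : 0 <= t * Sk * (1 - t).
      by apply: mulr_ge0; [apply: mulr_ge0; [exact: ltW | exact: Sk0] | rewrite subr_ge0; exact: ltW].
    move=> h; have e : t * (1 - t / 2) * Sk = t * Sk / 2 + t * Sk * (1 - t) / 2 by field.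
    rewrite e; lra.
  rewrite /S; lra.
have t2Sk : t ^+ 2 * Sk <= 2 * S.
  have : t * (t * Sk) <= 1 * (t * Sk).
    by apply: ler_wpM2r; [apply: mulr_ge0; [exact: ltW | exact: Sk0] | exact: ltW].
  by rewrite mul1r mulrA -expr2; lra.
have tSn : t * Sn <= 2 * S.
  have : t * Sn / 2 <= t * (1 - t / 2) * Sn.
    have : 0 <= t * Sn * (1 - t).
      by apply: mulr_ge0; [apply: mulr_ge0; [exact: ltW | exact: Sn0] | rewrite subr_ge0; exact: ltW].
    move=> h; have e : t * (1 - t / 2) * Sn = t * Sn / 2 + t * Sn * (1 - t) / 2 by field.
    rewrite e; lra.
  rewrite /S; lra.
have ntA : n%:R * t * Ak <= 2 * S.
  have : t * (n%:R * Ak) <= t * Sn by apply: ler_wpM2l => //; exact: ltW.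
  have e : n%:R * t * Ak = t * (n%:R * Ak) by ring.
  rewrite e; lra.
have tg0 : 0 <= t * gam by apply: mulr_ge0 => //; exact: ltW.
have kn' : t * gam * k%:R <= t * gam * n%:R.
  by apply: ler_wpM2l => //; rewrite ler_nat ltnW.
have hzk : `|zk - m| ^+ 2 <= `|x - m| ^+ 2 + 2 * (t * gam * n%:R) + 2 * S.
  have e : 2 * t * k%:R * (G m - lg) = 2 * (t * gam * k%:R) by rewrite /gam; ring.
  rewrite e in I3; lra.
set Q := `|w - zk| ^+ 2.
have hQ : Q <= K + 4 * (t * gam * n%:R).
  have := sq_sum2 (w - m) (m - zk).
  rewrite (_ : w - m + (m - zk) = w - zk); last by rewrite addrA subrK.
  rewrite (distrC m zk) -/Q /K; lra.
have hFk : F zk <= F w + `|a zk| * `|w - zk|.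
  have := FB zk w.
  have h1 := ipCSabs (b zk) (w - zk).
  have h2 := ler_norm (- ip (b zk) (w - zk)); rewrite normrN in h2.
  have h3 : `|b zk| * `|w - zk| <= `|a zk| * `|w - zk| by apply: ler_wpM2r.
  lra.
pose mu := n%:R * t * nu.
have mu0 : 0 < mu by apply: mulr_gt0 => //; apply: mulr_gt0.
have hab := amgm (`|a zk|) (`|w - zk|) mu mu0.
rewrite -/Q in hab.
have hmuA : mu * `|a zk| ^+ 2 <= nu * (2 * S).
  have e : mu * `|a zk| ^+ 2 = nu * (n%:R * t * Ak) by rewrite /mu /Ak; ring.
  by rewrite e; apply: ler_wpM2l => //; exact: ltW.
have hQmu : Q / mu <= K / mu + 4 * gam / nu.
  have : Q / mu <= (K + 4 * (t * gam * n%:R)) / mu by rewrite ler_pM2r ?invr_gt0.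
  have e : (K + 4 * (t * gam * n%:R)) / mu = K / mu + 4 * gam / nu.
    rewrite /mu; field; rewrite !gt_eqF //.
  by rewrite e.
have hKmu : K / mu < d / 3.
  rewrite ltr_pdivrMr //; rewrite ltr_pdivrMr // in Hn'.
  have e : d / 3 * mu = n%:R * (d * t * nu) / 3 by rewrite /mu; field.
  rewrite e; lra.
have hgnu : 4 * gam / nu < d / 3.
  rewrite ltr_pdivrMr //.
  have : gam * 12 < d * nu by rewrite -ltr_pdivlMr.
  lra.
have hnuS : nu * S < d / 3.
  have e : nu * (3 * (S + 1)) = d by rewrite /nu; field; rewrite gt_eqF // ltr_pwDr.
  have : 0 < nu := nu0.
  lra.
have hFzk : F zk - lf < d.
  have := Fl zk; lra.
have hFl := Fl zk.
have e : (1 - t / 2) * A = (1 - t / 2) * (F x - F zk) + (1 - t / 2) * (F zk - lf) by rewrite /A; ring.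
have : (1 - t / 2) * (F zk - lf) <= F zk - lf.
  rewrite -[X in _ <= X]mul1r; apply: ler_wpM2r; lra.
rewrite e; lra.
Qed.

Lemma bc {phi} (y : E) (M : R) : Gamma0 phi ->
  (M%:E < phi y + (2^-1 * `|y| ^+ 2)%:E)%E -> exists x, M < ip x y - Hf phi x.
Proof.
move=> G HM; have [_ _ lsc] := G.
set My := M - 2^-1 * `|y| ^+ 2.
have HMy : (My%:E < phi y)%E.
  have [Hy|[ry Hy]] := phi_cases y G; first by rewrite Hy ltey.
  by move: HM; rewrite Hy -EFinD !lte_fin /My; lra.
have [V /nbhs_ballP [r /= r0 rV] HV] := lsc _ _ HMy.
have [a [fa [al [be [Hfa be0 Hlb]]]]] := lin_lb G.
set e := `|y - a|.
set P := `|fa - al| + be * e.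
set B := 1 + be + P + e ^+ 2.
set Lw := al - be * (B + e).
set T := M - Lw - 2^-1 * `|y| ^+ 2.
have r20 : 0 < r ^+ 2 by rewrite exprn_gt0.
set c := 1 + `|T| / r ^+ 2.
have c1 : 1 <= c by rewrite /c lerDl divr_ge0 // ltW.
have c0 : 0 < c by lra.
have [yc Hyc] := @prox_ex phi c y G c0.
have [ryc [Hryc Hch]] := min_char G c0 Hyc.
set d := y - yc.
set x := yc + (2 * c) *: d.
have Hpx : is_prox phi x yc.
  move=> z; have [->|[rz Hz]] := phi_cases z G; first by rewrite addye ?leey.
  rewrite Hryc Hz -!EFinD lee_fin.
  have := Hch z rz Hz; rewrite -/d.
  have ex : x - yc = (2 * c) *: d by rewrite /x addrAC subrr add0r.
  have ez : x - z = (2 * c) *: d - (z - yc).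
    by rewrite /x opprB [RHS]addrCA addrA.
  rewrite ex ez normB2 ipZl.
  have := sqr_ge0 `|z - yc|; lra.
have [r' [Hr' HH]] := @H_eq phi x yc G Hpx.
have rr : r' = ryc by move: Hr'; rewrite Hryc => -[].
rewrite rr in HH.
exists x.
have key : ip x y - Hf phi x = ryc + 2^-1 * `|y| ^+ 2 + (2 * c - 2^-1) * `|d| ^+ 2.
  rewrite HH /x /d !ipnorm !(ipNl, ipNr, ipDl, ipDr, ipZl, ipZr).
  rewrite (ipC yc y).
  by field.
rewrite key.
have d2 : 0 <= `|d| ^+ 2 := sqr_ge0 _.
have c2 : 0 <= 2 * c - 2^-1 by lra.
have hd2 : 0 <= (2 * c - 2^-1) * `|d| ^+ 2 by apply: mulr_ge0.
have [dr|dr] := ltrP `|d| r.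
  have byc : ball y r yc by rewrite -ball_normE /=.
  have := HV yc (rV _ byc); rewrite Hryc lte_fin /My.
  by move=> h; lra.
set D := `|d| in dr d2 hd2 *.
have D0 : 0 <= D := normr_ge0 _.
have hmin := Hyc a; rewrite Hryc Hfa -!EFinD lee_fin -/e -/d -/D in hmin.
have hya : `|yc - a| <= D + e.
  rewrite (_ : yc - a = - d + (y - a)); last by rewrite /d opprB addrA subrK.
  by apply: le_trans (ler_normD _ _) _; rewrite normrN.
have hlb := Hlb yc; rewrite Hryc lee_fin in hlb.
have hbe : be * `|yc - a| <= be * (D + e) by apply: ler_wpM2l.
have hfa : fa - al <= `|fa - al| := ler_norm _.
have hD2 : D ^+ 2 <= P + be * D + e ^+ 2.
  have hX : 0 <= P + be * D.
    apply: addr_ge0; [apply: addr_ge0; [exact: normr_ge0 | exact: mulr_ge0 be0 (normr_ge0 _)] | exact: mulr_ge0 be0 D0].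
  have : c * (D ^+ 2 - e ^+ 2 - (P + be * D)) <= 0.
    have : (c - 1) * (P + be * D) >= 0 by apply: mulr_ge0 => //; lra.
    have e1 : c * (D ^+ 2 - e ^+ 2 - (P + be * D)) = c * D ^+ 2 - c * e ^+ 2 - (c - 1) * (P + be * D) - (P + be * D) by ring.
    rewrite e1 /P; move=> h; rewrite mulrDr in hbe; lra.
  rewrite pmulr_rle0 //; lra.
have hP0 : 0 <= P by apply: addr_ge0; [exact: normr_ge0 | exact: mulr_ge0 be0 (normr_ge0 _)].
have hQ : 0 <= P + e ^+ 2 by apply: addr_ge0 => //; exact: sqr_ge0.
have hDB : D <= B.
  have [D1|D1] := lerP D 1.
    rewrite /B; lra.
  have : D * D <= (P + e ^+ 2) * D + be * D.
    have : P + e ^+ 2 <= (P + e ^+ 2) * D by rewrite ler_peMr //; lra.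
    rewrite -expr2; lra.
  rewrite -mulrDl ler_pM2r; last lra.
  rewrite /B; lra.
have hLw : Lw <= ryc.
  have : be * (D + e) <= be * (B + e) by apply: ler_wpM2l => //; lra.
  rewrite /Lw; lra.
have hT : T < c * r ^+ 2.
  have e1 : c * r ^+ 2 = r ^+ 2 + `|T| by rewrite /c mulrDl mul1r divfK // gt_eqF.
  rewrite e1; have := ler_norm T; lra.
have hcr : c * r ^+ 2 <= (2 * c - 2^-1) * D ^+ 2.
  have : r ^+ 2 <= D ^+ 2 by rewrite ler_sqr ?nnegrE // ltW.
  move=> h; have : (2 * c - 2^-1) * r ^+ 2 <= (2 * c - 2^-1) * D ^+ 2 by apply: ler_wpM2l.
  have : c * r ^+ 2 <= (2 * c - 2^-1) * r ^+ 2.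
    by apply: ler_wpM2r; [exact: ltW | lra].
  lra.
rewrite /T in hT; lra.
Qed.

Lemma main_lemma (f g : E -> \bar R) (x0 : E) : Gamma0 f -> Gamma0 g ->
  x0 \in dom f `&` dom g ->
  (forall x : E, `|prox f x - x0| <= `|prox g x - x0|) ->
  forall y : E, (g y - g x0 <= f y - f x0)%E.
Proof.
move=> Gf Gg /set_mem[Hf0 Hg0] Hp y.
have [Hf0'|[rf0 Erf0]] := phi_cases x0 Gf; first by rewrite /dom /= Hf0' ltxx in Hf0.
have [Hg0'|[rg0 Erg0]] := phi_cases x0 Gg; first by rewrite /dom /= Hg0' ltxx in Hg0.
pose F x := Hf f x - ip x x0; pose b x := prox f x - x0.
pose G x := Hf g x - ip x x0; pose a x := prox g x - x0.
pose lf := - (rf0 + 2^-1 * `|x0| ^+ 2); pose lg := - (rg0 + 2^-1 * `|x0| ^+ 2).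
have GB : forall x z, G x + ip (a x) (z - x) <= G z.
  move=> x z; have := @H_B g x z Gg.
  rewrite /G /a !(ipBl, ipBr) (ipC x0 z) (ipC x0 x); lra.
have GC : forall x z, G z <= G x + ip (a x) (z - x) + 2^-1 * `|z - x| ^+ 2.
  move=> x z; have := @H_C g x z Gg.
  rewrite /G /a !(ipBl, ipBr) (ipC x0 z) (ipC x0 x); lra.
have FB : forall x z, F x + ip (b x) (z - x) <= F z.
  move=> x z; have := @H_B f x z Gf.
  rewrite /F /b !(ipBl, ipBr) (ipC x0 z) (ipC x0 x); lra.
have Gl : forall x, lg <= G x.
  by move=> x; have := @H_ge g x x0 rg0 Gg Erg0; rewrite /G /lg; lra.
have Fl : forall x, lf <= F x.
  by move=> x; have := @H_ge f x x0 rf0 Gf Erf0; rewrite /F /lf; lra.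
have Gm : forall gm, 0 < gm -> exists m, G m < lg + gm.
  move=> gm gm0.
  have HM : ((rg0 + 2^-1 * `|x0| ^+ 2 - gm)%:E < g x0 + (2^-1 * `|x0| ^+ 2)%:E)%E.
    by rewrite Erg0 -EFinD lte_fin; lra.
  have [x Hx] := @bc g x0 _ Gg HM; exists x; rewrite /G /lg; lra.
have Fm : forall gm, 0 < gm -> exists m, F m < lf + gm.
  move=> gm gm0.
  have HM : ((rf0 + 2^-1 * `|x0| ^+ 2 - gm)%:E < f x0 + (2^-1 * `|x0| ^+ 2)%:E)%E.
    by rewrite Erf0 -EFinD lte_fin; lra.
  have [x Hx] := @bc f x0 _ Gf HM; exists x; rewrite /F /lf; lra.
have cmp := @gd_compare F G a b lf lg GB GC FB Hp Gl Gm Fl Fm.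
have [Hfy|[ry Ery]] := phi_cases y Gf.
  by rewrite Hfy Erf0 addye // leey.
have cl : forall M, (M%:E < g y + (2^-1 * `|y| ^+ 2)%:E)%E ->
    M <= ry - rf0 + rg0 + 2^-1 * `|y| ^+ 2.
  move=> M HM; have [x Hx] := @bc g y _ Gg HM.
  have := cmp x; have := @H_ge f x y ry Gf Ery.
  rewrite /F /G /lf /lg; lra.
rewrite Erf0 Erg0 Ery.
have [Hgy|[rgy Ergy]] := phi_cases y Gg.
  have HM : ((ry - rf0 + rg0 + 2^-1 * `|y| ^+ 2 + 1)%:E < g y + (2^-1 * `|y| ^+ 2)%:E)%E.
    by rewrite Hgy addye // ltry.
  have := cl _ HM => h; exfalso; clear -h; lra.
rewrite Ergy -!EFinN -!EFinD lee_fin.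
rewrite leNgt; apply/negP => hlt.
have := cl (ry - rf0 + rg0 + 2^-1 * `|y| ^+ 2 + (rgy - rg0 - (ry - rf0)) / 2).
rewrite Ergy -EFinD lte_fin.
have h2 : 0 < (rgy - rg0 - (ry - rf0)) / 2 by rewrite divr_gt0 // subr_gt0.
move=> /(_ _); lra.
Qed.

End IP.

Theorem theorem2 (R : realType) (E : completeNormedModType R)
  (ip : E -> E -> R) (Hip : is_inner_product ip)
  (f g : E -> \bar R) (Hf : Gamma0 f) (Hg : Gamma0 g)
  (x0 : E) (Hx0 : x0 \in dom f `&` dom g)
  (Hprox : forall x : E, `|prox f x - x0| <= `|prox g x - x0|) :
  forall x : E, (g x - g x0 <= f x - f x0)%E.
Proof. exact: (@main_lemma R E ip Hip f g x0 Hf Hg Hx0 Hprox). Qed.
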